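(* Let $K$ be a field of characteristic zero. Suppose that for all $f,g\in K[X]$ with $\deg(f)=\deg(g)>1$ and all $x_0,y_0\in K$: if infinitely many points of $\mathcal{O}_f(x_0)\times\mathcal{O}_g(y_0)$ lie on the line $Y=X$, then $g^k=f^k$ for some positive integer $k$. Then for all $\alpha,\beta,x_0,y_0\in K$ with $\alpha\neq0$ and all $f,g\in K[X]$ with $\deg(f)=\deg(g)>1$: if infinitely many points of $\mathcal{O}_f(x_0)\times\mathcal{O}_g(y_0)$ lie on the line $Y=\alpha X+\beta$, then $g^k(\alpha X+\beta)=\alpha f^k(X)+\beta$ for some positive integer $k$.
   Context: $\mathcal{O}_f(x_0)=\{x_0,f(x_0),f(f(x_0)),\dots\}$ is the orbit of $x_0$ under $f$; $f^k$ denotes the $k$-th iterate of $f$ under composition. *)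

(* Defs.v *)
From mathcomp Require Import all_boot all_algebra.
Set Implicit Arguments. Unset Strict Implicit. Unset Printing Implicit Defensive.
Import GRing.Theory.
Local Open Scope ring_scope.

Definition in_orbit (K : nzRingType) (f : {poly K}) (x0 y : K) : Prop :=
  exists n : nat, y = iter n (fun x => f.[x]) x0.

Definition poly_iter (K : nzRingType) (k : nat) (f : {poly K}) : {poly K} :=
  iter k (fun p => p \Po f) 'X.

Definition infinite_pred (T : eqType) (P : T -> Prop) : Prop :=
  ~ (exists s : seq T, forall x, P x -> x \in s).

Definition inf_on_line (K : nzRingType) (f g : {poly K}) (x0 y0 a b : K) : Prop :=
  infinite_pred (fun p : K * K =>
    [/\ in_orbit f x0 p.1, in_orbit g y0 p.2 & p.2 = a * p.1 + b]).

(* Main.v *)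
Require Import Defs.
From mathcomp Require Import all_boot all_algebra.
Import GRing.Theory.
Local Open Scope ring_scope.

Section Aux.
Variable K : fieldType.
Variables (a b : K).
Hypothesis a0 : a != 0.
Let Lp : {poly K} := a *: 'X + b%:P.
Let Li : {poly K} := a^-1 *: ('X - b%:P).

Lemma LpLi : Lp \Po Li = 'X.
Proof.
rewrite /Lp /Li comp_polyD comp_polyZ comp_polyX comp_polyC scalerA mulfV //.
by rewrite scale1r subrK.
Qed.

Lemma LiLp : Li \Po Lp = 'X.
Proof.
rewrite /Li /Lp comp_polyZ comp_polyB comp_polyX comp_polyC addrK scalerA.
by rewrite mulVf // scale1r.
Qed.

Lemma Li_comp h : Li \Po h = a^-1 *: (h - b%:P).
Proof. by rewrite /Li comp_polyZ comp_polyB comp_polyX comp_polyC. Qed.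

Lemma iter_conj (g : {poly K}) k :
  poly_iter k (Li \Po (g \Po Lp)) = Li \Po (poly_iter k g \Po Lp).
Proof.
elim: k => [|k IH]; first by rewrite /poly_iter /= comp_polyX LiLp.
rewrite /poly_iter /= -/(poly_iter k _) IH.
rewrite -!comp_polyA; congr (Li \Po _).
rewrite (comp_polyA Lp Li) LpLi comp_polyX.
by rewrite comp_polyA.
Qed.

Lemma horner_LpLi y : Lp.[Li.[y]] = y.
Proof. by rewrite -horner_comp LpLi hornerX. Qed.

Lemma size_Lp : size Lp = 2%N.
Proof.
have sX : size (a *: 'X : {poly K}) = 2%N by rewrite size_scale // size_polyX.
rewrite /Lp size_polyDl sX //.
exact: (leq_ltn_trans (size_polyC_leq1 b)).
Qed.
End Aux.

Theorem lemma5p2 (K : fieldType) (char0 : [pchar K] =i pred0)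
  (Hdiag : forall (f g : {poly K}) (x0 y0 : K),
      size f = size g -> (2 < size f)%N ->
      inf_on_line f g x0 y0 1 0 ->
      exists k : nat, (0 < k)%N /\ poly_iter k g = poly_iter k f) :
  forall (a b x0 y0 : K) (f g : {poly K}),
    a != 0 ->
    size f = size g -> (2 < size f)%N ->
    inf_on_line f g x0 y0 a b ->
    exists k : nat, (0 < k)%N /\
      (poly_iter k g) \Po (a *: 'X + b%:P) = a *: poly_iter k f + b%:P.
Proof.
move=> a b x0 y0 f g a0 sfg sf Hinf.
set Lp := a *: 'X + b%:P.
set Li := a^-1 *: ('X - b%:P).
set g' := Li \Po (g \Po Lp).
have sg' : size g' = size g.
  have sc : size (g \Po Lp) = size g by rewrite size_comp_poly2 // size_Lp.
  rewrite /g' Li_comp size_scale ?invr_eq0 // size_polyDl sc //.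
  rewrite size_polyN.
  apply: (leq_ltn_trans (size_polyC_leq1 b)); rewrite -sfg; exact: ltnW.
have orb n : iter n (fun x => g'.[x]) Li.[y0] = Li.[iter n (fun x => g.[x]) y0].
  elim: n => [|n IH] //=; rewrite IH /g' !horner_comp.
  by rewrite (@horner_LpLi K a b a0).
have Hi : inf_on_line f g' x0 Li.[y0] 1 0.
  move=> [s Hs]; apply: Hinf.
    exists (map (fun p : K * K => (p.1, a * p.2 + b)) s) => [[x y]] /= [[n Hn] [m Hm] Hy].
    have -> : y = a * x + b by [].
    apply/mapP; exists (x, x) => //; apply: Hs; split => //=; first by exists n.
    exists m; rewrite orb -Hm Hy /Li hornerZ hornerD hornerN hornerX hornerC.
    by rewrite addrK mulrA mulVf // mul1r.
    by rewrite mul1r addr0.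
have [k [k0 Hk]] := Hdiag f g' x0 Li.[y0] (etrans sfg (esym sg')) sf Hi.
exists k; split => //.
have := congr1 (fun p => Lp \Po p) Hk; rewrite /g' iter_conj //.
rewrite comp_polyA (@LpLi K a b a0) comp_polyX => ->.
by rewrite /Lp comp_polyD comp_polyZ comp_polyX comp_polyC.
Qed.
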